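(* In the setting described in the context, the following are equivalent: (1) all jumps of the upper ramification filtration of $G=\mathrm{Gal}(F/k(x))$ at $P$ are integers, i.e. $\phi(b_i)\in\mathbb{Z}$ for all $i=1,\dots,h-1$; (2) for every $i=2,\dots,h-1$ the minimal term of $D_i$ has the form $\min D_i=a_i\,x^{\nu_{i,0}}\,\bar f_{i-1}$ for some $a_i\in k^*$ and integer $\nu_{i,0}\ge 0$; that is, writing $\min D_i=a_i x^{\nu_{i,0}}\bar f_1^{\nu_{i,1}}\cdots\bar f_{i-1}^{\nu_{i,i-1}}$, one has $\nu_{i,j}=0$ for $1\le j\le i-2$ and $\nu_{i,i-1}=1$.
   Context: Let $k$ be an algebraically closed field of characteristic $p\ge 5$. Let $\pi:X\to\mathbb{P}^1$ be a Galois cover of curves over $k$ (a Harbater–Katz–Gabber cover) with function field $F\supset k(x)$ and Galois group $G$, such that the only ramified point of $\mathbb{P}^1$ is $P_\infty$ (the pole of $x$), which is totally and wildly ramified, and $G$ is a $p$-group equal to its first ramification group $G_1$ (no tame ramification). Let $P$ be the unique point of $X$ over $P_\infty$ and $v$ the valuation of $F$ at $P$; thus $v(x)=-|G|$. The lower ramification groups at $P$ are $G_i=\{\sigma\in G: v(\sigma(t)-t)\ge i+1\}$ for a uniformizer $t$ at $P$. Let $b_1<b_2<\dots<b_{h-1}$ be the jumps of the lower ramification filtration (integers $i\ge1$ with $G_i\ne G_{i+1}$), so $G=G_{b_1}\gneq G_{b_2}\gneq\cdots\gneq G_{b_{h-1}}\gneq 1$; set $G_{b_h}=1$ and $[G_{b_i}:G_{b_{i+1}}]=p^{n_i}$.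 Each $b_i$ is prime to $p$. The Herbrand function is $\phi(u)=\int_0^u \frac{dt}{[G_0:G_t]}$ for $u\ge0$, and the upper jumps are the numbers $\phi(b_i)$; explicitly $\phi(b_i)=b_1+\sum_{j=2}^{i}\frac{b_j-b_{j-1}}{p^{n_1+\cdots+n_{j-1}}}$. Let $F_i=F^{G_{b_i}}$, so $F=F_h>F_{h-1}>\cdots>F_1=k(x)$. There are elements $\bar f_i\in F_{i+1}$ ($i=1,\dots,h-1$) with $F_{i+1}=F_i(\bar f_i)$, whose only pole is at $P$, with $v(\bar f_i)=-\bar m_i$ where $\bar m_i=p^{n_{i+1}+\cdots+n_{h-1}}b_i$, and whose minimal polynomial over $F_i$ is $X^{p^{n_i}}+a^{(i)}_{n_i-1}X^{p^{n_i-1}}+\cdots+a^{(i)}_0X-D_i$ with $a^{(i)}_j\in k$ and $D_i\in F_i$. Each $D_i$ has a unique expression as a finite sum $D_i=\sum \gamma^{(i)}_{\ell_0,\dots,\ell_{i-1}}x^{\ell_0}\bar f_1^{\ell_1}\cdots\bar f_{i-1}^{\ell_{i-1}}$ with $\gamma\in k$, $\ell_0\ge0$, $0\le\ell_j<p^{n_j}$; distinct such monomials have distinct valuations $v$. $\min D_i$ denotes the monomial summand (with its nonzero coefficient $a_i\in k^*$) of smallest valuation $v$; it satisfies $v(\min D_i)=v(D_i)=-p^{n_i}\bar m_i$. *)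

(* Defs.v *)
From HB Require Import structures.
From mathcomp Require Import all_boot all_order all_algebra all_fingroup all_solvable all_field.
Set Implicit Arguments. Unset Strict Implicit. Unset Printing Implicit Defensive.
Import Order.TTheory GRing.Theory Num.Theory.
Local Open Scope ring_scope.

Definition Kx (k : closedFieldType) : fieldType := {fraction {poly k}}.

Section Defs.
Variables (k : closedFieldType) (F : splittingFieldType (Kx k)).

Definition cst (c : k) : F := (tofrac (c%:P) : Kx k)%:A.
Definition xF : F := (tofrac ('X : {poly k}) : Kx k)%:A.

Definition Gal_F : {set gal_of (L:=F) fullv} := ('Gal(fullv / 1%VS))%g.

(* v is a normalized discrete valuation of F trivial on k, i.e. a point of
   the curve X (values on nonzero elements only; v 0 is irrelevant). *)
Definition dval (v : F -> int) : Prop :=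
  [/\ forall a b : F, a != 0 -> b != 0 -> v (a * b) = v a + v b,
      forall a b : F, a != 0 -> b != 0 -> a + b != 0 ->
        Num.min (v a) (v b) <= v (a + b),
      forall c : k, c != 0 -> v (cst c) = 0
    & exists t : F, t != 0 /\ v t = 1].

Definition ramgrp (v : F -> int) (t : F) (i : nat) : {set gal_of (L:=F) fullv} :=
  [set s in Gal_F | (s t == t) || ((i.+1)%:Z <= v (s t - t))].

(* Herbrand function at an integer u >= 0:
   phi(u) = int_0^u dt/[G_0:G_t] = sum_{j=1}^u |G_j|/|G_0|
   (G_t = G_{ceil t} for real t). *)
Definition herbrand (v : F -> int) (t : F) (u : nat) : rat :=
  \sum_(1 <= j < u.+1) ((#|ramgrp v t j|)%:R / (#|ramgrp v t 0|)%:R).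

Definition Gb (v : F -> int) (t : F) (h : nat) (b : nat -> nat) (i : nat)
  : {set gal_of (L:=F) fullv} :=
  if (0 < i < h)%N then ramgrp v t (b i) else [set 1%g].

Definition Fi (v : F -> int) (t : F) (h : nat) (b : nat -> nat) (i : nat)
  : {vspace F} := fixedField (Gb v t h b i).

Definition mono (fbar : nat -> F) (e : seq nat) : F :=
  xF ^+ (nth 0%N e 0) * \prod_(1 <= j < size e) fbar j ^+ (nth 0%N e j).

Definition min_term (v : F -> int) (fbar : nat -> F) (s : seq (seq nat))
  (e : seq nat) : Prop :=
  e \in s /\ forall e', e' \in s -> e' != e -> v (mono fbar e) < v (mono fbar e').

End Defs.

Definition mbar (p h : nat) (n b : nat -> nat) (i : nat) : nat :=
  (p ^ (\sum_(i.+1 <= j < h) n j) * b i)%N.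

(* Main.v *)
Require Import Defs.
From HB Require Import structures.
From mathcomp Require Import all_boot all_order all_algebra all_fingroup all_solvable all_field.
From mathcomp Require Import zify ring lra.
Import Order.TTheory GRing.Theory Num.Theory.
Local Open Scope ring_scope.


Section Val.
Variables (k : closedFieldType) (F : splittingFieldType (Kx k)) (v : F -> int).
Hypothesis Hv : dval v.

Lemma vM {a b : F} : a != 0 -> b != 0 -> v (a * b) = v a + v b.
Proof. by case: Hv => H _ _ _; apply: H. Qed.

Lemma v1 : v 1 = 0.
Proof.
have := vM (oner_neq0 F) (oner_neq0 F); rewrite mulr1 => e.
by apply: (@addrI _ (v 1)); rewrite addr0 -e.
Qed.

Lemma vN1 : v (-1) = 0.
Proof.
have h1 : (-1 : F) != 0 by rewrite oppr_eq0 oner_neq0.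
have := vM h1 h1; rewrite mulrNN mulr1 v1 => e; lia.
Qed.

Lemma vN (a : F) : a != 0 -> v (- a) = v a.
Proof.
move=> a0; rewrite -mulN1r vM ?vN1 ?add0r //.
by rewrite oppr_eq0 oner_neq0.
Qed.

Lemma vX (a : F) n : a != 0 -> v (a ^+ n) = (n%:Z * v a).
Proof.
move=> a0; elim: n => [|n IH]; first by rewrite expr0 v1 mul0r.
by rewrite exprS vM ?expf_neq0 // IH intS mulrDl mul1r.
Qed.

Lemma vD {a b : F} : a != 0 -> b != 0 -> a + b != 0 -> Num.min (v a) (v b) <= v (a + b).
Proof. by case: Hv => _ H _ _; apply: H. Qed.

Lemma vsum_gt (I : Type) (r : seq I) (P : pred I) (f : I -> F) (V : int) :
  (forall i, P i -> f i != 0 /\ V < v (f i)) ->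
  let S := \sum_(i <- r | P i) f i in S = 0 \/ V < v S.
Proof.
move=> H; elim: r => [|x r IH] /=; first by rewrite big_nil; left.
rewrite big_cons; case: ifP => Px //.
have [fx0 Vx] := H x Px.
case: IH => [-> | VS]; first by rewrite addr0; right.
set S := \sum_(i <- r | P i) f i in VS *.
have [S0|S0] := eqVneq S 0; first by rewrite S0 addr0; right.
have [T0|T0] := eqVneq (f x + S) 0; first by left.
right; apply: lt_le_trans (vD fx0 S0 T0).
by rewrite lt_min Vx VS.
Qed.

Lemma vstrict (a R : F) : a != 0 -> (R = 0 \/ v a < v R) ->
  a + R != 0 /\ v (a + R) = v a.
Proof.
move=> a0 [->|aR]; first by rewrite addr0.
have [R0|R0] := eqVneq R 0; first by rewrite R0 addr0.
have aRnz : a + R != 0.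
  apply/eqP => e; have : R = - a by apply/eqP; rewrite -addr_eq0 addrC e.
  by move=> eR; move: aR; rewrite eR vN // ltxx.
split => //; apply/eqP; rewrite eq_le; apply/andP; split.
  have e : (a + R) + (- R) = a by rewrite addrK.
  have NR : - R != 0 by rewrite oppr_eq0.
  have := vD aRnz NR; rewrite e => /(_ a0).
  rewrite vN // ge_min => /orP[//|h2].
  by have := lt_le_trans aR h2; rewrite ltxx.
have := vD a0 R0 aRnz.
by rewrite ge_min => /orP[//|h]; apply: le_trans h; apply/ltW.
Qed.

Lemma v_min_sum (I : eqType) (s : seq I) (e : I) (g : I -> F) :
  uniq s -> e \in s -> (forall e', e' \in s -> g e' != 0) ->
  (forall e', e' \in s -> e' != e -> v (g e) < v (g e')) ->
  v (\sum_(e' <- s) g e') = v (g e).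
Proof.
move=> us es gnz gmin; rewrite (bigD1_seq e es us) /= big_seq_cond.
have H := @vsum_gt I s (fun i => (i \in s) && (i != e)) g (v (g e)).
have hyp : forall i, (i \in s) && (i != e) -> g i != 0 /\ v (g e) < v (g i).
  by move=> i /andP[i_s ie]; split; [apply: gnz | apply: gmin].
by case: (@vstrict (g e) _ (gnz e es) (H hyp)) => _ ->.
Qed.

End Val.

Lemma exists_min (T : eqType) (s : seq T) (f : T -> int) : s != [::] ->
  exists2 e, e \in s & forall e', e' \in s -> f e <= f e'.
Proof.
elim: s => [//|x s IH] _.
have [->|sn] := eqVneq s [::].
  by exists x; rewrite ?inE // => e'; rewrite inE => /eqP ->.
have [e es emin] := IH sn.
have [le|lt] := leP (f x) (f e).
  exists x; first by rewrite inE eqxx.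
  move=> e'; rewrite inE => /orP[/eqP->//|/emin]; exact: le_trans.
exists e; first by rewrite inE es orbT.
move=> e'; rewrite inE => /orP[/eqP->|/emin//]; exact: ltW.
Qed.

Section Ram.
Variables (k : closedFieldType) (F : splittingFieldType (Kx k)) (v : F -> int) (t : F)
  (h : nat) (b n : nat -> nat) (p : nat).
Hypothesis (Hbinc : forall i, (0 < i)%N -> (i.+1 < h)%N -> (b i < b i.+1)%N)
  (Hjump : forall u, (0 < u)%N ->
     ramgrp v t u != ramgrp v t u.+1 <-> exists2 i, (0 < i < h)%N & u = b i)
  (Hn : forall i, (0 < i < h)%N ->
     #|Gb v t h b i| = (p ^ n i * #|Gb v t h b i.+1|)%N).

Lemma ram_sub u : ramgrp v t u.+1 \subset ramgrp v t u.
Proof.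
apply/subsetP => s; rewrite !inE => /andP[-> /orP[->//|H]].
by rewrite orbC (le_trans _ H) // lez_nat.
Qed.

Lemma ram_gal u : ramgrp v t u \subset Gal_F F.
Proof. by apply/subsetP => s; rewrite !inE => /andP[]. Qed.

Lemma b_mono l l' : (0 < l)%N -> (l < l')%N -> (l' < h)%N -> (b l < b l')%N.
Proof.
move=> l0; elim: l' => [//|l' IH] ll' lh.
have [e|/eqP ne] := eqVneq l l'; first by subst; apply: Hbinc.
have ll'2 : (l < l')%N by lia.
have h1 := IH ll'2 (ltnW lh).
have h2 : (b l' < b l'.+1)%N by apply: Hbinc; lia.
exact: ltn_trans h1 h2.
Qed.

Lemma const_between u w : (0 < u <= w)%N ->
  (forall j, (u <= j < w)%N -> ~ (exists2 i, (0 < i < h)%N & j = b i)) ->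
  ramgrp v t u = ramgrp v t w.
Proof.
move=> /andP[u0 uw]; elim: w uw => [|w IH] uw H; first by lia.
have [e|/eqP ne] := eqVneq u w.+1; first by rewrite e.
rewrite IH; [|lia|move=> j hj; apply: H; lia].
have hw : (u <= w < w.+1)%N by lia.
have w0 : (0 < w)%N by lia.
have nj := H w hw.
by apply/eqP; apply/negPn/negP => /(Hjump w w0).
Qed.

Lemma no_jump i j : (0 < i < h)%N -> (j < b i)%N ->
  (forall l, (0 < l < i)%N -> (b l < j)%N) ->
  ~ (exists2 l, (0 < l < h)%N & j = b l).
Proof.
move=> /andP[i0 ih] jb Hl [l /andP[l0 lh] e]; subst j.
have [li|il] := ltnP l i.
  have hl : (0 < l < i)%N by lia.
  by have := Hl l hl; rewrite ltnn.
have [e|/eqP ne] := eqVneq l i; first by move: jb; rewrite e ltnn.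
have il2 : (i < l)%N by lia.
have := @b_mono i l i0 il2 lh; lia.
Qed.

Lemma ram_const i j : (0 < i < h)%N -> (0 < j <= b i)%N ->
  (forall l, (0 < l < i)%N -> (b l < j)%N) ->
  ramgrp v t j = ramgrp v t (b i).
Proof.
move=> ih jb Hl; apply: const_between => // j' hj'.
have jb' : (j' < b i)%N by lia.
apply: (@no_jump i j' ih jb') => l hl; have := Hl l hl; lia.
Qed.

Definition Sn l := (\sum_(l <= j < h) n j)%N.

Lemma card_Gb l : (0 < l <= h)%N -> #|Gb v t h b l| = (p ^ Sn l)%N.
Proof.
move Em : (h - l)%N => m; elim: m l Em => [|m IH] l Em hl.
  have -> : l = h by lia.
  rewrite /Gb ltnn andbF cards1 /Sn big_geq //.
rewrite Hn; last by lia.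
rewrite IH; [|lia|lia].
by rewrite /Sn (big_ltn (_ : (l < h)%N)) ?expnD //; lia.
Qed.

Lemma ram0 : ramgrp v t 1 = Gal_F F -> ramgrp v t 0 = Gal_F F.
Proof.
move=> H1; apply/eqP; rewrite eqEsubset ram_gal /= -H1; exact: ram_sub.
Qed.

Lemma herb_split a c : (a <= c)%N ->
  herbrand v t c = herbrand v t a +
    \sum_(a.+1 <= j < c.+1) ((#|ramgrp v t j|)%:R / (#|ramgrp v t 0|)%:R).
Proof.
by move=> ac; rewrite /herbrand (@big_cat_nat _ _ _ a.+1 1 c.+1).
Qed.

Lemma herb_const a c (G : {set gal_of (L:=F) fullv}) : (a <= c)%N ->
  (forall j, (a < j <= c)%N -> ramgrp v t j = G) ->
  herbrand v t c = herbrand v t a +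
    (c - a)%N%:R * ((#|G|)%:R / (#|ramgrp v t 0|)%:R).
Proof.
move=> ac H; rewrite (@herb_split a c) //; congr (_ + _).
transitivity (\sum_(a.+1 <= j < c.+1) ((#|G|)%:R / (#|ramgrp v t 0|)%:R : rat)).
  apply: eq_big_nat => j hj; rewrite H //; lia.
by rewrite sumr_const_nat subSS [RHS]mulrC mulr_natr.
Qed.

End Ram.

Section Fld.
Variables (k : closedFieldType) (F : splittingFieldType (Kx k)).

Lemma cst_neq0 (c : k) : c != 0 -> cst F c != 0.
Proof.
move=> c0; rewrite /cst scaler_eq0 negb_or oner_neq0 andbT tofrac_eq0 polyC_eq0 //.
Qed.

Lemma xF_neq0 : xF F != 0.
Proof. by rewrite /xF scaler_eq0 negb_or oner_neq0 andbT tofrac_eq0 polyX_eq0. Qed.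

Lemma mono_special (fbar : nat -> F) (i nu : nat) : (1 < i)%N ->
  mono fbar (nu :: rcons (nseq (i - 2) 0%N) 1%N) = xF F ^+ nu * fbar i.-1.
Proof.
move=> i1; rewrite /mono /=; congr (_ * _).
rewrite size_rcons size_nseq.
have -> : (i - 2).+2 = i.-1.+1 by lia.
rewrite big_nat_recr /=; last by lia.
have E : nth 0%N (nu :: rcons (nseq (i-2) 0%N) 1%N) i.-1 = 1%N.
  by rewrite (_ : i.-1 = (i-2).+1) /= ?nth_rcons ?size_nseq ?ltnn ?eqxx //; lia.
rewrite E expr1 big1_seq ?mul1r //= => j; rewrite mem_index_iota => hj.
case: j hj => [|j] hj; first by lia.
have ji : (j < i - 2)%N by lia.
by rewrite /= nth_rcons size_nseq ji nth_nseq ji expr0.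
Qed.

Lemma mono_neq0 (fbar : nat -> F) (e : seq nat) :
  (forall j, (0 < j < size e)%N -> fbar j != 0) -> mono fbar e != 0.
Proof.
move=> H; rewrite /mono mulf_neq0 ?expf_neq0 ?xF_neq0 //.
rewrite prodf_seq_neq0; apply/allP => j; rewrite mem_index_iota => hj.
by apply/implyP => _; rewrite expf_neq0 // H.
Qed.

Lemma D_neq0 (K : {subfield F}) (x : F) (m p : nat) (c : nat -> F) (D : F) :
  (0 < p)%N -> x != 0 ->
  minPoly K x = 'X^(p ^ m) + \sum_(j < m) (c j)%:P * 'X^(p ^ j) - D%:P ->
  D != 0.
Proof.
move=> p0 x0 Hm; apply/negP => /eqP D0.
have r0 : root (minPoly K x) 0.
  have pm : forall j, (p ^ j == 0)%N = false.
    by move=> j; rewrite expn_eq0 (negbTE (lt0n_neq0 p0)).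
  rewrite Hm D0 /root !hornerE horner_sum.
  rewrite expr0n pm add0r subr0.
  apply/eqP; apply: big1 => j _; rewrite !hornerE expr0n pm.
  by rewrite mulr0.
have dX : 'X %| minPoly K x.
  by have := polyXsubCP (minPoly K x) 0; rewrite subr0 => H; apply/H/rootP.
have := minPoly_irr (polyOverX _) dX.
rewrite -size_poly_eq1 size_polyX orbF eqp_monic ?monicX ?monic_minPoly // => /eqP Em.
by have := root_minPoly K x; rewrite -Em rootX (negbTE x0).
Qed.

End Fld.


Lemma Sn_ltn h (n : nat -> nat) l : (l < h)%N -> Sn h n l = (n l + Sn h n l.+1)%N.
Proof. by move=> lh; rewrite /Sn big_ltn. Qed.

Lemma Sn_split h (n : nat -> nat) i : (1 <= i <= h)%N ->
  Sn h n 1 = (\sum_(1 <= j < i) n j + Sn h n i)%N.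
Proof. by move=> /andP[i1 ih]; rewrite /Sn (@big_cat_nat _ _ _ i). Qed.

Lemma arith (p h i nu : nat) (n b : nat -> nat) : (0 < p)%N -> (1 < i < h)%N ->
  (nu * p ^ Sn h n 1 + mbar p h n b i.-1 == p ^ n i * mbar p h n b i)%N =
  (nu * p ^ (\sum_(1 <= j < i) n j) + b i.-1 == b i)%N.
Proof.
move=> p0 hi.
have E1 : mbar p h n b i.-1 = (p ^ Sn h n i * b i.-1)%N.
  by rewrite /mbar /Sn prednK //; lia.
have E2 : (p ^ n i * mbar p h n b i = p ^ Sn h n i * b i)%N.
  by rewrite /mbar mulnA -expnD -Sn_ltn //; lia.
rewrite E1 E2 (@Sn_split h n i); last by lia.
set d := (\sum_(1 <= j < i) n j)%N.
have -> : (nu * p ^ (d + Sn h n i) + p ^ Sn h n i * b i.-1 =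
   p ^ Sn h n i * (nu * p ^ d + b i.-1))%N by rewrite expnD; ring.
by rewrite eqn_pmul2l ?expn_gt0 ?p0.
Qed.

Lemma size_special (c i : nat) : (1 < i)%N ->
  size (c :: rcons (nseq (i - 2) 0%N) 1%N) = i.
Proof. by move=> hi; rewrite /= size_rcons size_nseq; lia. Qed.

Lemma rng_special (p : nat) (n : nat -> nat) (i c : nat) :
  (1 < p)%N -> (1 < i)%N -> (0 < n i.-1)%N ->
  forall j, (0 < j < i)%N -> (nth 0%N (c :: rcons (nseq (i - 2) 0%N) 1%N) j < p ^ n j)%N.
Proof.
move=> p0 hi ni [|j] hj //.
rewrite [nth _ _ _]/= nth_rcons size_nseq.
have [hj2|hj2] := ltnP j (i - 2).
  by rewrite nth_nseq hj2 expn_gt0; lia.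
have ej : j = (i - 2)%N by lia.
have ej2 : j.+1 = i.-1 by lia.
by rewrite ej eqxx -ej ej2 -[1%N](expn0 p) ltn_exp2l //; lia.
Qed.

Theorem theorem3p1
  (k : closedFieldType) (p : nat)
  (F : splittingFieldType (Kx k))
  (v : F -> int) (t : F) (h : nat) (b n : nat -> nat)
  (fbar D : nat -> F) (a : nat -> nat -> k)
  (s : nat -> seq (seq nat)) (gam : nat -> seq nat -> k)
  (* characteristic p >= 5 *)
  (Hchar : p \in [pchar k]) (Hp5 : (5 <= p)%N)
  (* F / k(x) is Galois with group G = Gal_F *)
  (Hgal : galois 1%VS (fullv : {vspace F}))
  (* P: v is a place of F, t a uniformizer at P, v(x) = -|G| *)
  (Hv : dval v) (Ht : v t = 1) (Hvx : v (xF F) = - (#|Gal_F F|%:Z))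
  (* P is the only point over P_infty (the pole of x) *)
  (Huniq : forall w, dval w -> w (xF F) < 0 -> forall y : F, y != 0 -> w y = v y)
  (* no other point of P^1 is ramified *)
  (Hunram : forall w, dval w -> 0 <= w (xF F) ->
              exists f : Kx k, w (f%:A) = 1)
  (* G is a nontrivial p-group equal to G_1 *)
  (HpG : (p.-group (Gal_F F))%g) (HG1 : (1 < #|Gal_F F|)%N)
  (HGG1 : ramgrp v t 1 = Gal_F F)
  (* b_1 < ... < b_{h-1} are exactly the lower jumps *)
  (Hbinc : forall i, (0 < i)%N -> (i.+1 < h)%N -> (b i < b i.+1)%N)
  (Hjump : forall u, (0 < u)%N ->
     ramgrp v t u != ramgrp v t u.+1 <-> exists2 i, (0 < i < h)%N & u = b i)
  (* [G_{b_i} : G_{b_{i+1}}] = p^{n_i}, with G_{b_h} = 1 *)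
  (Hn : forall i, (0 < i < h)%N ->
     #|Gb v t h b i| = (p ^ n i * #|Gb v t h b i.+1|)%N)
  (* (stated in the context) each b_i is prime to p *)
  (Hbp : forall i, (0 < i < h)%N -> coprime (b i) p)
  (* the generators fbar_i of F_{i+1} over F_i *)
  (Hfin : forall i, (0 < i < h)%N -> fbar i \in Fi v t h b i.+1)
  (Hfgen : forall i, (0 < i < h)%N -> <<Fi v t h b i; fbar i>>%VS = Fi v t h b i.+1)
  (Hfnz : forall i, (0 < i < h)%N -> fbar i != 0)
  (Hfval : forall i, (0 < i < h)%N -> v (fbar i) = - ((mbar p h n b i)%:Z))
  (Hfpole : forall i, (0 < i < h)%N ->
     forall w, dval w -> 0 <= w (xF F) -> 0 <= w (fbar i))
  (* minimal polynomial X^{p^{n_i}} + sum_j a_j X^{p^j} - D_i over F_i *)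
  (HDin : forall i, (0 < i < h)%N -> D i \in Fi v t h b i)
  (Hmin : forall i, (0 < i < h)%N ->
     minPoly (Fi v t h b i) (fbar i) =
       'X^(p ^ n i) + \sum_(j < n i) (cst F (a i j))%:P * 'X^(p ^ j) - (D i)%:P)
  (* the expansion D_i = sum gamma x^{l_0} fbar_1^{l_1} ... fbar_{i-1}^{l_{i-1}} *)
  (Hsuniq : forall i, (0 < i < h)%N -> uniq (s i))
  (Hssize : forall i, (0 < i < h)%N -> forall e, e \in s i -> size e = i)
  (Hsrange : forall i, (0 < i < h)%N -> forall e, e \in s i ->
     forall j, (0 < j < i)%N -> (nth 0%N e j < p ^ n j)%N)
  (Hgamnz : forall i, (0 < i < h)%N -> forall e, e \in s i -> gam i e != 0)
  (HDexp : forall i, (0 < i < h)%N ->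
     D i = \sum_(e <- s i) cst F (gam i e) * mono fbar e)
  (* (stated in the context) distinct monomials have distinct valuations *)
  (Hdist : forall i, (0 < i < h)%N -> forall e e' : seq nat,
     size e = i -> size e' = i ->
     (forall j, (0 < j < i)%N -> nth 0%N e j < p ^ n j)%N ->
     (forall j, (0 < j < i)%N -> nth 0%N e' j < p ^ n j)%N ->
     e != e' -> v (mono fbar e) != v (mono fbar e'))
  (* (stated in the context) v(D_i) = -p^{n_i} mbar_i *)
  (HvD : forall i, (0 < i < h)%N -> v (D i) = - ((p ^ n i * mbar p h n b i)%N%:Z)) :
  (forall i, (0 < i < h)%N -> herbrand v t (b i) \is a Num.int)
  <->
  (forall i, (1 < i < h)%N ->
     exists nu0 : nat,
       let e := nu0 :: rcons (nseq (i - 2) 0%N) 1%N in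
       gam i e != 0 /\ min_term v fbar (s i) e).
Proof.
have p0 : (0 < p)%N by lia.
have cst0 : forall c : k, c != 0 -> v (cst F c) = 0.
  by case: Hv => _ _ H _.
have xnz := xF_neq0 k F.
have mono_nz : forall i, (0 < i < h)%N -> forall e, e \in s i -> mono fbar e != 0.
  move=> i hi e es; apply: mono_neq0 => j hj; apply: Hfnz.
  move: hj; rewrite (Hssize i hi e es) => /andP[j0 ji].
  by rewrite j0 (ltn_trans ji) //; case/andP: hi.
have term_nz : forall i, (0 < i < h)%N -> forall e, e \in s i ->
    cst F (gam i e) * mono fbar e != 0.
  move=> i hi e es; apply: mulf_neq0; last exact: (mono_nz i hi e es).
  by apply: cst_neq0; apply: (Hgamnz i hi e es).
have vterm : forall i, (0 < i < h)%N -> forall e, e \in s i ->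
    v (cst F (gam i e) * mono fbar e) = v (mono fbar e).
  move=> i hi e es.
  by rewrite (vM _ _ _ Hv (cst_neq0 _ _ _ (Hgamnz i hi e es)) (mono_nz i hi e es)) cst0 ?add0r // Hgamnz.
have vDmin : forall i, (0 < i < h)%N -> forall e, min_term v fbar (s i) e ->
    v (D i) = v (mono fbar e).
  move=> i hi e [es emin].
  rewrite HDexp // (v_min_sum _ _ _ Hv _ _ e _ (Hsuniq i hi) es).
  - by rewrite vterm.
  - exact: term_nz i hi.
  - by move=> e' e's ne; rewrite !vterm //; apply: emin.
have vspecial : forall i nu, (1 < i < h)%N ->
   v (mono fbar (nu :: rcons (nseq (i - 2) 0%N) 1%N)) =
     - ((nu * #|Gal_F F| + mbar p h n b i.-1)%N : int).
  move=> i nu hi; rewrite mono_special; last by lia.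
  have hi1 : (0 < i.-1 < h)%N by lia.
  rewrite (vM _ _ _ Hv (expf_neq0 _ xnz) (Hfnz _ hi1)) (vX _ _ _ Hv) // Hvx Hfval //.
  rewrite PoszD PoszM; ring.
have G0 : ramgrp v t 0 = Gal_F F := ram0 _ _ v t HGG1.
have cardb : forall i, (0 < i < h)%N -> #|ramgrp v t (b i)| = (p ^ Sn h n i)%N.
  move=> i hi; have hl : (0 < i <= h)%N by lia.
  have := card_Gb _ _ v t h b n p Hn i hl.
  by rewrite /Gb hi.
have b_pos : forall i, (0 < i < h)%N -> (0 < b i)%N.
  move=> i hi; have := Hbp i hi; case: (b i) => // ; rewrite /coprime gcd0n => /eqP; lia.
have rc := ram_const _ _ v t h b Hbinc Hjump.
have cardP : (1 < h)%N -> #|Gal_F F| = (p ^ Sn h n 1)%N.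
  move=> hh1; have hb1 : (0 < 1 < h)%N by lia.
  have b1 := b_pos 1 hb1.
  have e1 : ramgrp v t 1 = ramgrp v t (b 1) by apply: (rc 1 1 hb1) => //; lia.
  by rewrite -HGG1 e1 cardb.
have bm := b_mono h b Hbinc.
have herb1 : (1 < h)%N -> herbrand v t (b 1) = (b 1)%:R.
  move=> hh1; have hb1 : (0 < 1 < h)%N by lia.
  have b1 := b_pos 1 hb1.
  rewrite (herb_const _ _ v t 0 (b 1) (Gal_F F)) //.
    rewrite /herbrand big_geq // add0r subn0 G0 mulfV ?mulr1 //.
    by rewrite pnatr_eq0 -lt0n; lia.
  move=> j hj; rewrite -HGG1 (rc 1 j hb1) ?(rc 1 1 hb1) //; lia.
have herbstep : forall i, (1 < i < h)%N ->
    herbrand v t (b i) = herbrand v t (b i.-1) +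
      (b i - b i.-1)%N%:R / (p ^ (\sum_(1 <= j < i) n j))%N%:R.
  move=> i hi; have hi' : (0 < i < h)%N by lia.
  have bb : (b i.-1 < b i)%N by apply: bm; lia.
  rewrite (herb_const _ _ v t (b i.-1) (b i) (ramgrp v t (b i))); last 2 first.
  - exact: ltnW.
  - move=> j hj; apply: rc => //; first by lia.
    move=> l hl; have [e|/eqP ne] := eqVneq l i.-1; first by rewrite e; lia.
    have := bm l i.-1 ltac:(lia) ltac:(lia) ltac:(lia); lia.
  congr (_ + _); rewrite G0 cardb // cardP; last by lia.
  rewrite (Sn_split h n i); last by lia.
  rewrite expnD natrM; field.
  by rewrite !pnatr_eq0 !expn_eq0 (negbTE (lt0n_neq0 p0)).
have vspD : forall i nu, (1 < i < h)%N ->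
    v (mono fbar (nu :: rcons (nseq (i - 2) 0%N) 1%N)) = v (D i) <->
    (nu * p ^ (\sum_(1 <= j < i) n j) + b i.-1 = b i)%N.
  move=> i nu hi; have hi' : (0 < i < h)%N by lia.
  rewrite vspecial // HvD // cardP; last by lia.
  split.
    by move/oppr_inj => [] /eqP; rewrite (arith p h i nu n b) // => /eqP.
  by move/eqP; rewrite -(arith p h i nu n b) // => /eqP ->.
split=> [H1|H2]; last first.
  move=> i /andP[]; elim: i => [//|i IH] _ ih.
  have [i0|i0] := posnP i.
    by rewrite i0 herb1 ?intr_nat ?natr_nat //; lia.
  have hi : (1 < i.+1 < h)%N by lia.
  have [nu [gnz mt]] := H2 _ hi.
  have hi' : (0 < i.+1 < h)%N by lia.
  have := vDmin _ hi' _ mt; move/esym/(vspD _ _ hi) => Eb.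
  rewrite herbstep // -Eb /= addnK natrM mulfK; last first.
    by rewrite pnatr_eq0 expn_eq0 (negbTE (lt0n_neq0 p0)).
  by rewrite rpredD ?IH ?intr_nat ?natr_nat //; lia.
move=> i hi.
have hi' : (0 < i < h)%N by lia.
have hi1 : (0 < i.-1 < h)%N by lia.
set d := (\sum_(1 <= j < i) n j)%N.
have pd0 : (p ^ d)%:R != 0 :> rat by rewrite pnatr_eq0 expn_eq0 (negbTE (lt0n_neq0 p0)).
have bb : (b i.-1 < b i)%N by apply: bm; lia.
have Hint : (b i - b i.-1)%N%:R / (p ^ d)%N%:R \is a @Num.int rat.
  have : herbrand v t (b i) - herbrand v t (b i.-1) \is a Num.int.
    by rewrite rpredB ?H1.
  by rewrite herbstep // addrC addKr.
have Hnat : (b i - b i.-1)%N%:R / (p ^ d)%N%:R \is a @Num.nat rat.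
  by rewrite -intrEge0 // divr_ge0 // ler0n.
have [c Hc] := natrP Hnat.
have Eb : (c * p ^ d + b i.-1)%N = b i.
  have : (b i - b i.-1)%N%:R = (c * p ^ d)%N%:R :> rat.
    by rewrite natrM -Hc mulfVK.
  move/eqP; rewrite eqr_nat => /eqP; lia.
have Dnz : D i != 0 :=
  D_neq0 _ _ (Fi v t h b i) (fbar i) (n i) p (fun j => cst F (a i j)) (D i)
    p0 (Hfnz i hi') (Hmin i hi').
have sn : s i != [::].
  apply: contra Dnz => /eqP E; by rewrite HDexp // E big_nil.
have [es es_in esmin] := exists_min _ (s i) (fun e => v (mono fbar e)) sn.
have rng : forall e, e \in s i -> forall j, (0 < j < i)%N -> (nth 0%N e j < p ^ n j)%N.
  by move=> e ee j hj; exact: (Hsrange i hi' e ee j hj).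
have mt : min_term v fbar (s i) es.
  split => // e' e's ne.
  rewrite lt_neqAle esmin // andbT.
  apply: (Hdist i hi' es e' (Hssize i hi' es es_in) (Hssize i hi' e' e's)
    (rng es es_in) (rng e' e's)).
  by rewrite eq_sym.
have npos : (0 < n i.-1)%N.
  rewrite lt0n; apply/negP => /eqP n0.
  have bp := b_pos _ hi1.
  have jump : ramgrp v t (b i.-1) != ramgrp v t (b i.-1).+1.
    by apply/(Hjump _ bp); exists i.-1.
  move/negP: jump; apply; rewrite eq_sym eqEcard ram_sub /=.
  have -> : ramgrp v t (b i.-1).+1 = ramgrp v t (b i).
    apply: rc => //.
    move=> l hl; have [e|/eqP ne] := eqVneq l i.-1; first by rewrite e ltnSn.
    have hl' : (l < i.-1)%N by clear -hl ne; lia.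
    case/andP: hl => l0 _; case/andP: hi1 => _ ih1.
    exact: ltn_trans (bm l i.-1 l0 hl' ih1) (ltnSn _).
  rewrite !cardb //.
  rewrite (Sn_ltn h n i.-1); last by case/andP: hi1.
  rewrite n0 add0n prednK //; by case/andP: hi'.
have p1 : (1 < p)%N by clear -Hp5; lia.
have i1 : (1 < i)%N by case/andP: hi.
pose e' := c :: rcons (nseq (i - 2) 0%N) 1%N.
have se' : size e' = i := size_special c i i1.
have rng' := rng_special p n i c p1 i1 npos.
have ve' : v (mono fbar e') = v (mono fbar es).
  by rewrite -(vDmin i hi' es mt); apply/(vspD _ _ hi).
have Ee : e' = es.
  apply/eqP/negPn/negP => ne.
  have := Hdist i hi' e' es se' (Hssize i hi' es es_in) rng' (rng es es_in) ne.
  by rewrite ve' eqxx.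
exists c; change (gam i e' != 0 /\ min_term v fbar (s i) e').
by rewrite Ee; split => //; apply: (Hgamnz i hi' es es_in).
Qed.
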